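(* Let $X\subseteq\mathbb{R}$ be dense in $\mathbb{R}$ (with the subspace topology). Then $X$ is a Baire space if and only if $G\cap X$ is dense in $X$ for every dense $G_\delta$ subset $G$ of $\mathbb{R}$.
   Context: A Baire space is a space in which countable intersections of dense open sets are dense. *)

(* Defs.v *)
From mathcomp Require Import all_boot all_order all_algebra.
From mathcomp Require Import all_classical all_reals all_analysis.
From mathcomp Require Import borel_hierarchy.
Set Implicit Arguments.
Unset Strict Implicit.
Unset Printing Implicit Defensive.
Local Open Scope classical_set_scope.

Definition baire_space (T : topologicalType) : Prop :=
  forall F : (set T)^nat, (forall i, open (F i) /\ dense (F i)) ->
    dense (\bigcap_i F i).

(* Main.v *)
Require Import Defs.
From mathcomp Require Import all_boot all_order all_algebra.
From mathcomp Require Import all_classical all_reals all_analysis.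
From mathcomp Require Import borel_hierarchy.
Import numFieldNormedType.Exports.
Local Open Scope classical_set_scope.

Lemma dense_sub {T : topologicalType} {A B : set T} :
  dense A -> A `<=` B -> dense B.
Proof.
move=> dA AB O O0 oO; have [x [Ox Ax]] := dA O O0 oO.
by exists x; split => //; apply: AB.
Qed.

Lemma open_settype (R : realType) (X : set R) (U : set (set_type X)) :
  open U -> exists W : set R, open W /\ set_val @^-1` W = U.
Proof. by move=> [W oW <-]; exists W. Qed.

Lemma open_settype_pre (R : realType) (X : set R) (W : set R) :
  open W -> open (set_val @^-1` W : set (set_type X)).
Proof. by move=> oW; exists W. Qed.

Lemma dense_pre (R : realType) (X : set R) (W : set R) :
  dense X -> open W -> dense W -> dense (set_val @^-1` W : set (set_type X)).
Proof.
move=> dX oW dW O [x Ox] /open_settype [V [oV VO]].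
have V0 : V !=set0 by exists (set_val x); rewrite -VO in Ox.
have [y [[Vy Wy] Xy]] := dX (V `&` W) (dW V V0 oV) (openI oV oW).
exists (exist _ y (mem_set Xy)); split => //.
by rewrite -VO.
Qed.

Theorem lemma4p6 (R : realType) (X : set R) :
  dense X ->
  (baire_space (set_type X) <->
   (forall G : set R, Gdelta G -> dense G ->
      dense (set_val @^-1` G : set (set_type X)))).
Proof.
move=> dX; split.
- move=> bX G [A oA ->] dG.
  have dI : dense (\bigcap_i (set_val @^-1` A i : set (set_type X))).
    apply: bX => i; split; first exact: open_settype_pre.
    apply: dense_pre => //; apply: (@dense_sub R _ (A i) dG) => y Hy; exact: Hy.
  refine (dense_sub dI _) => x Hx i _; exact: Hx.
- move=> H; rewrite /baire_space => F oF.
  have /choice [W HW] : forall i, exists W : set R, open W /\ set_val @^-1` W = F i.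
    by move=> i; apply: open_settype; case: (oF i).
  have dW : forall i, dense (W i).
    move=> i O [x Ox] oO.
    have [y Xy] : exists y, X y /\ O y.
      have [y [Oy Xy]] := dX O (ex_intro _ x Ox) oO; by exists y.
    have := (proj2 (oF i)) (set_val @^-1` O) _ (@open_settype_pre R X O oO).
    case.
      by exists (exist _ y (mem_set (proj1 Xy))); exact: (proj2 Xy).
    move=> z [Oz Fz]; exists (set_val z); split => //.
    by rewrite -(proj2 (HW i)) in Fz.
  have dG : dense (\bigcap_i W i).
    apply: Baire => i; split; [exact: (proj1 (HW i))|exact: dW].
  have dP : dense (set_val @^-1` (\bigcap_i W i) : set (set_type X)).
    apply: (H _ _ dG); by exists W => // i; exact: (proj1 (HW i)).
  refine (dense_sub dP _) => x Hx i _.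
  by rewrite -(proj2 (HW i)); exact: Hx.
Qed.
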